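(* Let $n\in\mathbb N$, $p>0$, and let $W\subseteq[n]$ satisfy $p|W|\ge 200\log n$. Let $d$ satisfy $1\le d\le p|W|/(240\log(np))$. Then, with probability $1-o(n^{-2})$ (as $n\to\infty$), in $G=G(n,p)$ every set $U\subseteq V(G)$ with $|U|\le |W|/(4d)$ satisfies $|N(U,W)|\ge d|U|$.
   Context: $G(n,p)$ is the binomial random graph on $[n]$. For $U\subseteq V(G)$, $N(U)=\big(\bigcup_{u\in U}N(u)\big)\setminus U$ and $N(U,W)=N(U)\cap W$. $\log$ is the natural logarithm; $p,W,d$ may depend on $n$. *)

(* Defs.v *)
From HB Require Import structures.
From mathcomp Require Import all_boot all_order all_algebra.
From mathcomp Require Import all_classical all_reals all_analysis.
Set Implicit Arguments. Unset Strict Implicit. Unset Printing Implicit Defensive.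
Import Order.TTheory GRing.Theory Num.Theory.
Local Open Scope ring_scope.

(* A graph on [n] = 'I_n is encoded by an edge indicator on ordered pairs;
   only pairs (i,j) with i < j are meaningful (an edge {i,j}). *)
Definition graph (n : nat) := {ffun 'I_n * 'I_n -> bool}.

Definition adj (n : nat) (G : graph n) (u v : 'I_n) : bool :=
  if (u < v)%N then G (u, v) else if (v < u)%N then G (v, u) else false.

(* Probability mass of G under the binomial random graph G(n,p):
   every pair i<j is an edge independently with probability p;
   entries G (i,j) with ~~ (i < j) must be false (mass 0 otherwise). *)
Definition gnp_weight (R : realType) (n : nat) (p : R) (G : graph n) : R :=
  \prod_(e : 'I_n * 'I_n)
     (if (e.1 < e.2)%N then (if G e then p else 1 - p)
      else (if G e then 0 else 1)).

Definition gnp_prob (R : realType) (n : nat) (p : R) (A : pred (graph n)) : R :=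
  \sum_(G : graph n | A G) gnp_weight p G.

Definition nbhd (n : nat) (G : graph n) (U : {set 'I_n}) : {set 'I_n} :=
  [set v | (v \notin U) && [exists u in U, adj G u v]].

Definition nbhdW (n : nat) (G : graph n) (U W : {set 'I_n}) : {set 'I_n} :=
  nbhd G U :&: W.

Definition expands (R : realType) (n : nat) (W : {set 'I_n}) (d : R)
  (G : graph n) : bool :=
  [forall U : {set 'I_n},
     ((#|U|%:R : R) <= #|W|%:R / (4 * d)) ==> (d * #|U|%:R <= #|nbhdW G U W|%:R)].

(* Main.v *)
Require Import Defs.
From HB Require Import structures.
From mathcomp Require Import all_boot all_order all_algebra.
From mathcomp Require Import all_classical all_reals all_analysis.
Import Order.TTheory GRing.Theory Num.Theory.
Import numFieldNormedType.Exports.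
Local Open Scope classical_set_scope.
Local Open Scope ring_scope.

From mathcomp Require Import ring lra.
Local Close Scope classical_set_scope.


Lemma sum_option (R : realType) (T : finType) (F : option T -> R) :
  \sum_(o : option T) F o = F None + \sum_(v : T) F (Some v).
Proof.
rewrite (bigD1 None) //=; congr (_ + _).
rewrite (reindex_omap Some id) /=; last by case.
by apply: eq_bigl => j; rewrite eqxx.
Qed.

Lemma prod_pairs (R : realType) n (F : 'I_n -> 'I_n -> R) :
  (forall a, F a a = 1) ->
  \prod_(e : 'I_n * 'I_n | (e.1 < e.2)%N) (F e.1 e.2 * F e.2 e.1) =
  \prod_(a : 'I_n) \prod_(c : 'I_n) F a c.
Proof.
move=> Fd; rewrite big_split /= pair_big /=.
rewrite [RHS](bigID (fun e : 'I_n * 'I_n => (e.1 < e.2)%N)) /=; congr (_ * _).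
rewrite [RHS](bigID (fun e : 'I_n * 'I_n => e.1 == e.2)) /=.
rewrite [X in _ = X * _]big1; last by move=> [a b] /= /andP[_ /eqP ->].
rewrite mul1r (reindex (fun e : 'I_n * 'I_n => (e.2, e.1))) /=; last first.
  by exists (fun e : 'I_n * 'I_n => (e.2, e.1)) => -[a b].
apply: eq_bigl => -[a b] /=.
by rewrite -(inj_eq val_inj) /=; case: ltngtP.
Qed.


Section Prob.
Variables (R : realType) (n : nat) (p : R) (W U : {set 'I_n}) (t : R).
Hypotheses (p0 : 0 <= p) (p1 : p <= 1) (t0 : 0 < t) (t1 : t <= 1).

Definition inWU (c : 'I_n) := (c \in W) && (c \notin U).
Definition phi (o : option 'I_n) (a c : 'I_n) (bit : bool) : R :=
  if (a \in U) && inWU c then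
    (match o with Some v => if v == a then (bit%:R) else 1 | None => (~~bit)%:R end)
  else 1.
Definition psi (g : {ffun 'I_n -> option 'I_n}) (e : 'I_n * 'I_n) (bit : bool) : R :=
  if (e.1 < e.2)%N then phi (g e.2) e.1 e.2 bit * phi (g e.1) e.2 e.1 bit else 1.
Definition omega (c : 'I_n) (o : option 'I_n) : R :=
  match o with None => 1 | Some v => if (v \in U) && inWU c then t else 0 end.
Definition rho (e : 'I_n * 'I_n) (bit : bool) : R :=
  if (e.1 < e.2)%N then (if bit then p else 1 - p) else (if bit then 0 else 1).
Definition Phi o a c := p * phi o a c true + (1 - p) * phi o a c false.
Definition chi c (o : option 'I_n) : R :=
  if inWU c then (match o with Some v => if v \in U then p else 1
                   | None => (1 - p) ^+ #|U| end) else 1.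
Definition gG (G : graph n) : {ffun 'I_n -> option 'I_n} :=
  [ffun c => if inWU c then [pick a in U | adj G a c] else None].

Lemma phi_ge0 o a c b : 0 <= phi o a c b.
Proof. rewrite /phi; case: ifP => // _; case: o => [v|]; try case: ifP => //; by case: b. Qed.

Lemma psi_ge0 g e b : 0 <= psi g e b.
Proof. rewrite /psi; case: ifP => // _; apply: mulr_ge0; exact: phi_ge0. Qed.

Lemma omega_ge0 c o : 0 <= omega c o.
Proof. rewrite /omega; case: o => // v; case: ifP => // _; exact: ltW. Qed.

Lemma rho_ge0 e b : 0 <= rho e b.
Proof. rewrite /rho; case: ifP => _; case: b => //; by rewrite subr_ge0. Qed.

Lemma weight_ge0 (G : graph n) : 0 <= gnp_weight p G.
Proof. apply: prodr_ge0 => e _; exact: (rho_ge0 e (G e)). Qed.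

Lemma phi_gG (G : graph n) a c : phi (gG G c) a c (adj G a c) = 1.
Proof.
rewrite /phi ffunE; case: ifP => // /andP[aU wc]; rewrite wc.
case: pickP => [v /andP[vU av] | none].
  by case: eqP => [<-|] //; rewrite av.
by have := none a; rewrite aU /= => ->.
Qed.

Lemma psi_gG (G : graph n) e : psi (gG G) e (G e) = 1.
Proof.
case: e => i j; rewrite /psi /=; case: ifP => // lt.
have e1 : G (i, j) = adj G i j by rewrite /adj lt.
have e2 : G (i, j) = adj G j i by move: lt; rewrite /adj; case: ltngtP.
by rewrite {1}e1 phi_gG e2 phi_gG mulr1.
Qed.

Lemma coef_gG (G : graph n) : \prod_c omega c (gG G c) = t ^+ #|nbhdW G U W|.
Proof.
rewrite -prodr_const [RHS]big_mkcond; apply: eq_bigr => c _.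
rewrite /omega /nbhdW /nbhd !inE ffunE /inWU.
case: (c \in W); case: (c \in U) => //=; rewrite ?andbF //.
case: pickP => [v /andP[vU av] | none] /=.
  rewrite vU (_ : [exists u in U, adj G u c] = true) //.
  by apply/existsP; exists v; rewrite vU.
rewrite (_ : [exists u in U, adj G u c] = false) //.
by apply/existsP => -[x /andP[xU ax]]; have := none x; rewrite xU ax.
Qed.

Lemma E_prod (F : 'I_n * 'I_n -> bool -> R) :
  \sum_(G : graph n) \prod_e (rho e (G e) * F e (G e)) =
  \prod_e (rho e true * F e true + rho e false * F e false).
Proof.
rewrite (eq_bigr (fun e => \sum_(b : bool) rho e b * F e b)); last by move=> e _; rewrite big_bool.
by rewrite bigA_distr_bigA.
Qed.


Lemma sum_rho_psi g e :
  rho e true * psi g e true + rho e false * psi g e false =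
  if (e.1 < e.2)%N then Phi (g e.2) e.1 e.2 * Phi (g e.1) e.2 e.1 else 1.
Proof.
rewrite /psi /rho /Phi; case: ifP => lt; last by rewrite mul0r add0r mulr1.
have [hA|hA] := boolP ((e.1 \in U) && inWU e.2);
  have [hB|hB] := boolP ((e.2 \in U) && inWU e.1).
- by case/andP: hA => h1 _; case/andP: hB => _ /andP[_ /negP].
- rewrite /phi (negbTE hB); ring.
- rewrite /phi (negbTE hA); ring.
- rewrite /phi (negbTE hA) (negbTE hB); ring.
Qed.

Lemma prod_Phi o c : \prod_a Phi o a c = chi c o.
Proof.
rewrite /chi; case: ifP => h; last first.
  by apply: big1 => a _; rewrite /Phi /phi h andbF; ring.
case: o => [v|].
  rewrite (bigD1 v) //= big1 ?mulr1.
    by rewrite /Phi /phi h andbT; case: (v \in U) => /=; rewrite ?eqxx /=; ring.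
  move=> a av; rewrite /Phi /phi h andbT; case: (a \in U) => /=; last ring.
  by rewrite eq_sym (negbTE av); ring.
rewrite -prodr_const [RHS]big_mkcond; apply: eq_bigr => a _.
by rewrite /Phi /phi h andbT; case: (a \in U) => /=; ring.
Qed.

Lemma Eg g : \sum_(G : graph n) gnp_weight p G * \prod_e psi g e (G e) =
  \prod_c chi c (g c).
Proof.
rewrite (eq_bigr (fun G : graph n => \prod_e (rho e (G e) * psi g e (G e)))); last first.
  by move=> G _; rewrite big_split.
rewrite E_prod (eq_bigr _ (fun e _ => sum_rho_psi g e)) -big_mkcond /=.
rewrite (@prod_pairs R n (fun a c => Phi (g c) a c)); last first.
  by move=> a; rewrite /Phi /phi /inWU; case: (a \in U); rewrite /= ?andbF; ring.
rewrite exchange_big; apply: eq_bigr => c _; exact: prod_Phi.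
Qed.

Lemma sum_omega_chi c : \sum_o omega c o * chi c o =
  if inWU c then (1 - p) ^+ #|U| + #|U|%:R * t * p else 1.
Proof.
rewrite sum_option /omega /chi; case: ifP => h /=.
  rewrite mul1r; congr (_ + _).
  rewrite (eq_bigr (fun v => if v \in U then t * p else 0)); last first.
    by move=> v _; rewrite andbT; case: (v \in U); rewrite ?mul0r.
  by rewrite -big_mkcond sumr_const -mulr_natl; ring.
by rewrite big1 ?addr0 ?mulr1 // => v _; rewrite andbF mul0r.
Qed.

Lemma sum_g : \sum_(g : {ffun 'I_n -> option 'I_n})
   (\prod_c omega c (g c)) * \prod_c chi c (g c) =
   ((1 - p) ^+ #|U| + #|U|%:R * t * p) ^+ #|W :\: U|.
Proof.
transitivity (\prod_c \sum_o omega c o * chi c o); last first.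
  rewrite (eq_bigr _ (fun c _ => sum_omega_chi c)) -big_mkcond /=.
  by rewrite (eq_bigl (fun c => c \in W :\: U)) ?prodr_const // => c; rewrite !inE /inWU andbC.
rewrite bigA_distr_bigA; apply: eq_bigr => g _; by rewrite big_split.
Qed.

Lemma bad_bound (P : pred (graph n)) K :
  (forall G, P G -> (#|nbhdW G U W| <= K)%N) ->
  \sum_(G | P G) gnp_weight p G <=
  (t ^+ K)^-1 * ((1 - p) ^+ #|U| + #|U|%:R * t * p) ^+ #|W :\: U|.
Proof.
move=> hK.
pose S (G : graph n) := \sum_(g : {ffun 'I_n -> option 'I_n})
   (\prod_c omega c (g c)) * \prod_e psi g e (G e).
have S_ge0 G : 0 <= S G.
  apply: sumr_ge0 => g _; apply: mulr_ge0; apply: prodr_ge0 => *;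
  [exact: omega_ge0 | exact: psi_ge0].
have S_ge G : P G -> t ^+ K <= S G.
  move=> PG; apply: le_trans (_ : t ^+ #|nbhdW G U W| <= _).
    by apply: ler_wiXn2l => //; [exact: ltW | exact: hK].
  rewrite -coef_gG /S (bigD1 (gG G)) //=.
  rewrite [X in _ <= _ * X + _]big1 ?mulr1; last by move=> e _; exact: psi_gG.
  rewrite lerDl; apply: sumr_ge0 => g _; apply: mulr_ge0; apply: prodr_ge0 => *;
  [exact: omega_ge0 | exact: psi_ge0].
have tK : 0 < t ^+ K by exact: exprn_gt0.
apply: le_trans (_ : \sum_(G | P G) gnp_weight p G * ((t ^+ K)^-1 * S G) <= _).
  apply: ler_sum => G PG; rewrite -[X in X <= _]mulr1; apply: ler_wpM2l.
    exact: weight_ge0.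
  by rewrite mulrC ler_pdivlMr // mul1r; exact: S_ge.
apply: le_trans (_ : \sum_G gnp_weight p G * ((t ^+ K)^-1 * S G) <= _).
  rewrite [X in _ <= X](bigID P) /= lerDl; apply: sumr_ge0 => G _.
  apply: mulr_ge0; [exact: weight_ge0 | apply: mulr_ge0 => //].
  by rewrite invr_ge0 ltW.
rewrite (eq_bigr (fun G => (t ^+ K)^-1 * (gnp_weight p G * S G))); last first.
  by move=> G _; rewrite mulrCA.
rewrite -mulr_sumr; apply: ler_wpM2l; first by rewrite invr_ge0 ltW.
rewrite -sum_g le_eqVlt; apply/orP; left; apply/eqP.
rewrite /S (eq_bigr (fun G => \sum_(g : {ffun 'I_n -> option 'I_n}) gnp_weight p G * ((\prod_c omega c (g c)) * \prod_e psi g e (G e)))); last first.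
  by move=> G _; rewrite mulr_sumr.
rewrite exchange_big /=; apply: eq_bigr => g _.
rewrite (eq_bigr (fun G => (\prod_c omega c (g c)) * (gnp_weight p G * \prod_e psi g e (G e)))); last first.
  by move=> G _; rewrite mulrCA.
by rewrite -mulr_sumr Eg.
Qed.

End Prob.


Section Ana.
Variable R : realType.

Lemma two_le_e : 2 <= expR (1 : R).
Proof. by have := expR_ge1Dx (1 : R). Qed.

Lemma combine3 (A B C a b c : R) : 0 <= A -> 0 <= B -> 0 <= C ->
  A <= expR a -> B <= expR b -> C <= expR c -> a + b + c <= 0 -> A * (B * C) <= 1.
Proof.
move=> A0 B0 C0 Aa Bb Cc abc.
apply: le_trans (_ : expR a * (expR b * expR c) <= _).
  apply: ler_pM => //; first exact: mulr_ge0.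
  exact: ler_pM.
by rewrite -!expRD expR_le1 addrA.
Qed.

Lemma powle (B a : R) k : 0 <= B -> B <= expR a -> B ^+ k <= expR (k%:R * a).
Proof.
move=> B0 Ba; rewrite expRM_natl; apply: lerXn2r => //; rewrite ?nnegrE // (le_trans B0 Ba).
Qed.

Lemma b_le (p : R) u : 0 <= p -> p <= 1 -> (1 - p) ^+ u <= expR (- (p * u%:R)).
Proof.
move=> p0 p1; rewrite mulrC -mulrN; apply: powle; first by rewrite subr_ge0.
by have := expR_ge1Dx (- p); rewrite -(addrC (- p)).
Qed.

Lemma key (n u K m : nat) (p d w : R) :
  0 < p -> p <= 1 -> 1 <= d -> 0 <= w -> 0 <= ln (n%:R : R) ->
  200 * ln (n%:R : R) <= p * w -> 240 * d <= p * w ->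
  (0 < u)%N -> u%:R * (4 * d) <= w -> K%:R <= d * u%:R -> w - u%:R <= m%:R -> (0 < n)%N ->
  exists t, [/\ 0 < t, t <= 1 &
    n%:R ^+ (2 * u + 3) * ((t ^+ K)^-1 * ((1 - p) ^+ u + u%:R * t * p) ^+ m) <= 1].
Proof.
move=> p0 p1 d1 w0 L0 hL hd u0 hu hK hm n0.
set U := (u%:R : R); set Kr := (K%:R : R); set M := (m%:R : R); set L := ln (n%:R : R).
rewrite -/U in hu hK hm; rewrite -/Kr in hK; rewrite -/M in hm; rewrite -/L in L0 hL.
have U1 : 1 <= U by rewrite /U ler1n.
have K0 : 0 <= Kr by rewrite /Kr ler0n.
have M0 : 0 <= M by rewrite /M ler0n.
set x := p * U; set X := x * w.
have x0 : 0 < x by rewrite /x mulr_gt0 // (lt_le_trans ltr01).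
have b0 : 0 <= (1 - p) ^+ u by rewrite exprn_ge0 // subr_ge0.
have hb := b_le p u (ltW p0) p1; rewrite -/U -/x in hb.
have hn : n%:R ^+ (2 * u + 3) <= expR ((2 * u + 3)%:R * L).
  rewrite expRM_natl /L lnK // posrE ltr0n //.
have f1 : (2 * u + 3)%:R * L <= X / 40.
  have e : (2 * u + 3)%:R = 2 * U + 3 :> R by rewrite /U natrD natrM.
  rewrite e; have h1 : U * (200 * L) <= U * (p * w) by apply: ler_wpM2l => //; lra.
  rewrite /X /x; nra.
have f2 : Kr <= X / 240.
  have h1 : U * (240 * d) <= U * (p * w) by apply: ler_wpM2l => //; lra.
  rewrite /X /x; nra.
have hM : 3 * w / 4 <= M by nra.
have f3 : 3 * w / 4 * x <= M * x by apply: ler_wpM2r => //; exact: ltW.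
have X0 : 0 <= X by rewrite /X mulr_ge0 // ltW.
have [xs|xl] := lerP x 3.
- have t0 : (0 : R) < 16^-1 by rewrite invr_gt0.
  exists (16^-1); split => //; first by rewrite invr_le1 // ?ler1n // unitfE.
  have B0 : 0 <= ((16 : R)^-1 ^+ K)^-1 by rewrite invr_ge0 exprn_ge0 // ltW.
  have C0 : 0 <= (1 - p) ^+ u + U * 16^-1 * p.
    by rewrite addr_ge0 // mulr_ge0 // ?mulr_ge0 ?ler0n ?ltW.
  apply: (@combine3 _ _ _ ((2 * u + 3)%:R * L) (Kr * 4) (M * (- (3 / 16 * x))) _ B0 (exprn_ge0 _ C0) hn).
  + by rewrite exprn_ge0 // ler0n.
  + rewrite exprVn invrK; apply: powle => //.
    have e4 : expR (4 : R) = expR 1 ^+ 4 by rewrite -expRM_natl mulr1.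
    rewrite e4; have := two_le_e; have := @lerXn2r R 4 2 (expR 1).
    rewrite !nnegrE => h; move/h => /(_ (ler0n _ 2) (ltW (expR_gt0 1))).
    apply: le_trans; lra.
  + apply: powle => //.
    have ex : expR (- x) * (1 + x) <= 1.
      rewrite expRN -[X in _ <= X](mulVf (lt0r_neq0 (expR_gt0 x))).
      by apply: ler_wpM2l; [rewrite invr_ge0 ltW // expR_gt0 | exact: expR_ge1Dx].
    have hb2 : (1 - p) ^+ u * (1 + x) <= 1.
      apply: le_trans ex; apply: ler_wpM2r => //; lra.
    have h3 : (1 + x) * (1 - x / 4 - (1 - p) ^+ u) >= 0 by nra.
    have h4 : 0 <= 1 - x / 4 - (1 - p) ^+ u.
      by move: h3; rewrite pmulr_rge0 //; lra.
    apply: le_trans (_ : 1 + (- (3 / 16 * x)) <= _); last exact: expR_ge1Dx.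
    have -> : U * 16^-1 * p = x / 16 by rewrite /x; field.
    lra.
  + rewrite /X in f1 f2 X0; nra.
- have xe : 0 < expR x by exact: expR_gt0.
  have t0 : 0 < expR (- x) / x by rewrite divr_gt0 // expR_gt0.
  exists (expR (- x) / x); split => //.
    rewrite ler_pdivrMr // mul1r; apply: le_trans (_ : 1 <= x); last lra.
    by rewrite expR_le1; lra.
  have B0 : 0 <= ((expR (- x) / x) ^+ K)^-1 by rewrite invr_ge0 exprn_ge0 // ltW.
  have e1 : U * (expR (- x) / x) * p = expR (- x).
    by rewrite /x; field; rewrite pnatr_eq0 -lt0n u0 lt0r_neq0.
  have C0 : 0 <= (1 - p) ^+ u + U * (expR (- x) / x) * p.
    by rewrite e1 addr_ge0 // ltW // expR_gt0.
  apply: (@combine3 _ _ _ ((2 * u + 3)%:R * L) (Kr * (3 / 2 * x)) (M * (1 - x)) _ B0 (exprn_ge0 _ C0) hn).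
  + by rewrite exprn_ge0 // ler0n.
  + rewrite -exprVn; apply: powle; first by rewrite invr_ge0 ltW.
    rewrite invf_div expRN invrK.
    have e2 : expR (x / 2) = expR (x / 4) ^+ 2 by rewrite -expRM_natl; congr expR; field.
    have h1 : 1 + x / 4 <= expR (x / 4) by exact: expR_ge1Dx.
    have h2 : (1 + x / 4) ^+ 2 <= expR (x / 4) ^+ 2.
      by apply: lerXn2r; rewrite ?nnegrE // ?ltW ?expR_gt0 //; lra.
    have h3 : x <= expR (x / 2) by rewrite e2; apply: le_trans h2; have := sqr_ge0 (1 - x / 4); rewrite !expr2; lra.
    have -> : 3 / 2 * x = x / 2 + x by field.
    by rewrite expRD; apply: ler_wpM2r => //; exact: ltW.
  + apply: powle => //.
    rewrite e1 expRD; have := two_le_e; have := expR_gt0 (- x); nra.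
  + have f4 : Kr * x <= w / 4 * x.
      apply: ler_wpM2r; [exact: ltW | nra].
    have f5 : M * (1 - x) <= 3 * w / 4 * (1 - x) by apply: ler_wnM2r; lra.
    have f6 : 3 * w <= X by rewrite /X; nra.
    rewrite /X in f1 f6; nra.
Qed.

End Ana.


Lemma sum_sets (R : realType) (T : finType) (x : R) :
  \sum_(U : {set T}) x ^+ #|U| = (x + 1) ^+ #|T|.
Proof.
rewrite (reindex (fun f : {ffun T -> bool} => [set i | f i])) /=; last first.
  exists (fun U : {set T} => [ffun i => i \in U]) => [f _|U _].
    by apply/ffunP => i; rewrite ffunE inE.
  by apply/setP => i; rewrite inE ffunE.
rewrite (eq_bigr (fun f : {ffun T -> bool} => \prod_i (if f i then x else 1))); last first.
  by move=> f _; rewrite -prodr_const big_mkcond; apply: eq_bigr => i _; rewrite inE.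
rewrite -(bigA_distr_bigA (fun (i : T) (b : bool) => if b then x else 1)) /= (eq_bigr (fun _ => x + 1)); last by move=> i _; rewrite big_bool.
by rewrite prodr_const.
Qed.

Definition badU {R : realType} {n : nat} (W : {set 'I_n}) (d : R) (U : {set 'I_n}) (G : graph n) :=
  ((#|U|%:R : R) <= #|W|%:R / (4 * d)) && ~~ (d * #|U|%:R <= #|nbhdW G U W|%:R).

Lemma union (R : realType) n (p : R) (W : {set 'I_n}) (d : R) :
  0 <= p -> p <= 1 ->
  gnp_prob p (fun G => ~~ expands W d G) <=
  \sum_(U : {set 'I_n}) \sum_(G | badU W d U G) gnp_weight p G.
Proof.
move=> p0 p1; rewrite /gnp_prob.
have w0 (G : graph n) : 0 <= gnp_weight p G.
  apply: prodr_ge0 => e _; case: ifP => _; case: (G e) => //; by rewrite subr_ge0.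
apply: le_trans (_ : \sum_(G | ~~ expands W d G) \sum_(U | badU W d U G) gnp_weight p G <= _).
  apply: ler_sum => G /forallPn [U]; rewrite negb_imply => hU.
  rewrite (bigD1 U) //= lerDl; exact: sumr_ge0.
apply: le_trans (_ : \sum_G \sum_(U | badU W d U G) gnp_weight p G <= _).
  rewrite [X in _ <= X](bigID (fun G => ~~ expands W d G)) /= lerDl.
  by apply: sumr_ge0 => G _; apply: sumr_ge0.
rewrite (eq_bigr (fun G => \sum_U if badU W d U G then gnp_weight p G else 0)); last first.
  by move=> G _; rewrite big_mkcond.
rewrite exchange_big /=; apply: ler_sum => U _; rewrite [X in _ <= X]big_mkcond //.
Qed.


Section Main.
Variable R : realType.

Lemma e_le4 : expR (1 : R) <= 4.
Proof.
have h1 : 1 + (- 2^-1) <= expR (- 2^-1 : R) by exact: expR_ge1Dx.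
have h2 : expR (2^-1 : R) <= 2.
  rewrite -[X in X <= _]invrK -expRN -[X in _ <= X]invrK lef_pV2 ?posrE ?expR_gt0 //.
  by apply: le_trans h1; lra.
have -> : (1 : R) = 2^-1 + 2^-1 by field.
rewrite expRD; have := expR_gt0 (2^-1 : R); nra.
Qed.

Lemma perU (n : nat) (p d : R) (W U : {set 'I_n}) :
  0 < p -> p <= 1 -> 1 <= d -> 0 <= ln (n%:R : R) ->
  200 * ln (n%:R : R) <= p * #|W|%:R -> 240 * d <= p * #|W|%:R -> (0 < n)%N ->
  \sum_(G | badU W d U G) gnp_weight p G <=
  (n%:R ^+ 3)^-1 * ((n%:R ^+ 2)^-1) ^+ #|U|.
Proof.
move=> p0 p1 d1 L0 hL hd n0.
have nR : (0 : R) < n%:R by rewrite ltr0n.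
have rhs0 : 0 <= (n%:R ^+ 3)^-1 * ((n%:R ^+ 2)^-1) ^+ #|U| :> R.
  by rewrite mulr_ge0 // ?exprn_ge0 // invr_ge0 exprn_ge0 // ltW.
have [hs|hs] := boolP ((#|U|%:R : R) <= #|W|%:R / (4 * d)); last first.
  by rewrite big_pred0 // => G; rewrite /badU (negbTE hs).
have [u0|u0] := posnP #|U|.
  rewrite big_pred0 // => G; rewrite /badU u0 mulr0 ler0n.
  by rewrite andbF.
set K := Num.truncn (d * #|U|%:R).
have d0 : 0 < d by lra.
have hu : #|U|%:R * (4 * d) <= (#|W|%:R : R) by rewrite -ler_pdivlMr // mulr_gt0.
have hK : (K%:R : R) <= d * #|U|%:R by rewrite truncn_le mulr_ge0 // ltW.
have hm : (#|W|%:R : R) - #|U|%:R <= #|W :\: U|%:R.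
  rewrite lerBlDr -natrD ler_nat -(cardsID U W) addnC leq_add2l.
  by apply: subset_leq_card; exact: subsetIr.
have [t [t0 t1 ht]] := @key R n #|U| K #|W :\: U| p d #|W|%:R p0 p1 d1 (ler0n _ _) L0 hL hd u0 hu hK hm n0.
apply: le_trans (@bad_bound R n p W U t (ltW p0) p1 t0 t1 (badU W d U) K _) _.
  move=> G /andP[_ hG]; rewrite truncn_ge_nat; last by rewrite mulr_ge0 // ltW.
  by rewrite ltW // ltNge.
have -> : (n%:R ^+ 3)^-1 * ((n%:R ^+ 2)^-1) ^+ #|U| = (n%:R ^+ (2 * #|U| + 3) : R)^-1.
  by rewrite exprVn -invfM -exprM -exprD addnC.
rewrite -[X in _ <= X]mul1r ler_pdivlMr ?exprn_gt0 // mulrC.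
exact: ht.
Qed.


Lemma bound_n (n : nat) (p d : R) (W : {set 'I_n}) :
  0 < p -> p <= 1 -> 200 * ln (n%:R : R) <= p * #|W|%:R -> 1 <= d ->
  d <= p * #|W|%:R / (240 * ln (n%:R * p)) -> (4 <= n)%N ->
  0 <= n%:R ^+ 2 * gnp_prob p (fun G : graph n => ~~ expands W d G) <= expR 1 / n%:R.
Proof.
move=> p0 p1 hL d1 hd n4.
have nR : (0 : R) < n%:R by rewrite ltr0n (leq_trans _ n4).
have w0 (G : graph n) : 0 <= gnp_weight p G.
  by apply: prodr_ge0 => e _; case: ifP => _; case: (G e); rewrite ?subr_ge0 // ltW.
have P0 : 0 <= gnp_prob p (fun G : graph n => ~~ expands W d G) by apply: sumr_ge0 => H _; exact: w0.
apply/andP; split; first by rewrite mulr_ge0 // exprn_ge0 // ltW.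
have L1 : 1 <= ln (n%:R : R).
  rewrite -ler_expR lnK ?posrE //; apply: le_trans e_le4 _; by rewrite (ler_nat R 4 n).
have wn : (#|W|%:R : R) <= n%:R by rewrite ler_nat; have := max_card (mem W); rewrite card_ord.
have L2 : 1 <= ln (n%:R * p).
  rewrite -ler_expR lnK ?posrE ?mulr_gt0 //; apply: le_trans e_le4 _.
  have : p * #|W|%:R <= p * n%:R by apply: ler_wpM2l => //; exact: ltW.
  rewrite (mulrC _ p); lra.
have hd' : 240 * d <= p * #|W|%:R.
  move: hd; rewrite ler_pdivlMr ?mulr_gt0 //; last lra.
  nra.
have h1 : gnp_prob p (fun G : graph n => ~~ expands W d G) <=
          (n%:R ^+ 3)^-1 * ((n%:R ^+ 2)^-1 + 1) ^+ n.
  apply: le_trans (@union R n p W d (ltW p0) p1) _.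
  have -> : ((n%:R ^+ 2)^-1 + 1) ^+ n = \sum_(U : {set 'I_n}) ((n%:R ^+ 2)^-1) ^+ #|U| :> R.
    by rewrite sum_sets card_ord.
  rewrite mulr_sumr; apply: ler_sum => U _.
  apply: perU => //; first lra.
  exact: (leq_trans _ n4).
have h2 : ((n%:R ^+ 2)^-1 + 1) ^+ n <= expR (1 : R).
  apply: le_trans (_ : expR (n%:R * (n%:R ^+ 2)^-1) <= _).
    apply: powle; first by rewrite addr_ge0 // invr_ge0 exprn_ge0 // ltW.
    by rewrite addrC; exact: expR_ge1Dx.
  rewrite ler_expR expr2 invfM mulrA mulfV ?lt0r_neq0 // mul1r invr_le1 ?unitfE ?lt0r_neq0 //.
  by rewrite (ler_nat R 1 n) (leq_trans _ n4).
apply: le_trans (_ : n%:R ^+ 2 * ((n%:R ^+ 3)^-1 * expR 1) <= _).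
  apply: ler_wpM2l; first by rewrite exprn_ge0 // ltW.
  apply: le_trans h1 _; apply: ler_wpM2l => //; by rewrite invr_ge0 exprn_ge0 // ltW.
rewrite le_eqVlt; apply/orP; left; apply/eqP; field.
by rewrite lt0r_neq0.
Qed.

End Main.

Local Open Scope classical_set_scope.
Local Open Scope ring_scope.


Theorem lemma3p39 (R : realType) (p : nat -> R) (W : forall n : nat, {set 'I_n})
  (d : nat -> R)
  (hyp : exists N0 : nat, forall n : nat, (N0 <= n)%N ->
     [/\ 0 < p n, p n <= 1,
         200 * ln (n%:R) <= p n * #|W n|%:R,
         1 <= d n &
         d n <= p n * #|W n|%:R / (240 * ln (n%:R * p n))]) :
  (fun n : nat => (n%:R : R) ^+ 2 *
      gnp_prob (p n) (fun G : graph n => ~~ expands (W n) (d n) G))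
    @ \oo --> (0 : R).
Proof.
case: hyp => N0 hN.
apply: (@squeeze_cvgr _ _ _ _ (fun _ => 0) (fun k => 2 * expR 1 * harmonic k)).
- near=> k.
  have k4 : (maxn N0 4 <= k)%N by near: k; exact: nbhs_infty_ge.
  have [p0 p1 hL d1 hd] := hN k (leq_trans (leq_maxl _ _) k4).
  have /andP[h0 h1] := @bound_n R k (p k) (d k) (W k) p0 p1 hL d1 hd (leq_trans (leq_maxr _ _) k4).
  rewrite h0 /=; apply: le_trans h1 _.
  have kR : (0 : R) < k%:R by rewrite ltr0n (leq_trans _ (leq_trans (leq_maxr _ _) k4)).
  have e0 := expR_gt0 (1 : R).
  have k1 : (1 : R) <= k%:R by rewrite (ler_nat R 1 k) (leq_trans _ (leq_trans (leq_maxr _ _) k4)).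
  rewrite ler_pdivrMr // mulrAC ler_pdivlMr ?ltr0n // -addn1 natrD; nra.
- exact: cvg_cst.
- rewrite -(mulr0 (2 * expR (1 : R))); apply: cvgMl_tmp; exact: cvg_harmonic.
Unshelve. all: by end_near.
Qed.
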